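(* Let $\alpha\in(0,1)$ be irrational, and for $k\ge1$ write the $k$-th matrix of the Minkowski chain of $\alpha$ (case $n=1$) as $$B_k=\begin{pmatrix} q & -p\\ q' & -p'\end{pmatrix}.$$ Then the $k$-th pair in the Hurwitz chain of $\alpha$ is either $(\tfrac{p}{q},\tfrac{p'}{q'})$ or $(\tfrac{p'}{q'},\tfrac{p}{q})$.
   Context: Farey sets: for $m\in\mathbb{Z}^+$, $\mathcal{F}_m$ is the set of rationals in $[0,1]$ (in lowest terms) with denominator at most $m$, in increasing order. Hurwitz chain: for each $m$ let $(\tfrac{p}{q},\tfrac{p'}{q'})$ be the unique pair of successive elements of $\mathcal{F}_m$ with $\tfrac pq<\alpha<\tfrac{p'}{q'}$; the Hurwitz chain of $\alpha$ is the sequence of distinct such pairs as $m=1,2,3,\dots$, in order of appearance (first pair $(\tfrac01,\tfrac11)$). Minkowski chain (general definition, here used with $n=1$, $\alpha_1=\alpha$): Let $n\ge1$, $\ell=n+1$, $(\alpha_1,\dots,\alpha_n)\in\mathbb{R}^n$ with $\alpha_1,\dots,\alpha_n,1$ linearly independent over $\mathbb{Q}$. For $r=(r_1,\dots,r_\ell)\in\mathbb{Z}^\ell$ put $\xi(r)=r_1\alpha_1+\cdots+r_n\alpha_n+r_\ell$. For a real matrix or vector, $\|\cdot\|_\infty$ is the maximum absolute value of its entries. For $m\in\mathbb{Z}^+$, $A_m$ is the nonsingular integral $\ell\times\ell$ matrix with rows $w_1,\dots,w_\ell$ chosen successively: $w_i$ is the vector $w\in\mathbb{Z}^\ell$ with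 $\|w\|_\infty\le m$, linearly independent of $w_1,\dots,w_{i-1}$, minimizing $|\xi(w)|$, normalized so that its first nonzero entry is positive (this is unique by the linear independence hypothesis). Write $\beta_i=\xi(w_i)$, i.e. $A_m(\alpha_1,\dots,\alpha_n,1)^\top=(\beta_1,\dots,\beta_\ell)^\top$, so $0<|\beta_1|<\cdots<|\beta_\ell|$. The Minkowski chain $B_1,B_2,\dots$ is the sequence of distinct matrices among $A_1,A_2,A_3,\dots$ in order of appearance ($B_1=A_1$). *)

(* Defs.v *)
From Stdlib Require Import Reals ZArith List ClassicalEpsilon.
Open Scope R_scope.

Definition xi (alpha : R) (r : Z * Z) : R := IZR (fst r) * alpha + IZR (snd r).

Definition in_box (m : nat) (r : Z * Z) : Prop :=
  (Z.abs (fst r) <= Z.of_nat m)%Z /\ (Z.abs (snd r) <= Z.of_nat m)%Z.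

Definition normalized (r : Z * Z) : Prop :=
  (0 < fst r)%Z \/ (fst r = 0%Z /\ (0 < snd r)%Z).

Definition lin_indep2 (u v : Z * Z) : Prop :=
  forall a b : Z, (a * fst u + b * fst v = 0)%Z -> (a * snd u + b * snd v = 0)%Z ->
    a = 0%Z /\ b = 0%Z.

(* w1: minimizer of |xi| over nonzero vectors (= linearly independent of the
   empty family) in the box, normalized. *)
Definition is_w1 (alpha : R) (m : nat) (w : Z * Z) : Prop :=
  in_box m w /\ w <> (0%Z, 0%Z) /\ normalized w /\
  forall v, in_box m v -> v <> (0%Z, 0%Z) -> Rabs (xi alpha w) <= Rabs (xi alpha v).

Definition is_w2 (alpha : R) (m : nat) (w1 w : Z * Z) : Prop :=
  in_box m w /\ lin_indep2 w1 w /\ normalized w /\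
  forall v, in_box m v -> lin_indep2 w1 v -> Rabs (xi alpha w) <= Rabs (xi alpha v).

(* The matrix A_m, represented by its two rows (w1, w2). *)
Definition is_A (alpha : R) (m : nat) (M : (Z * Z) * (Z * Z)) : Prop :=
  is_w1 alpha m (fst M) /\ is_w2 alpha m (fst M) (snd M).

Definition A_mat (alpha : R) (m : nat) : (Z * Z) * (Z * Z) :=
  epsilon (inhabits ((0%Z, 0%Z), (0%Z, 0%Z))) (fun M => is_A alpha m M).

Definition in_Farey (m : nat) (x : R) : Prop :=
  exists p q : Z, (0 < q)%Z /\ (q <= Z.of_nat m)%Z /\ (0 <= p)%Z /\ (p <= q)%Z /\
    Z.gcd p q = 1%Z /\ x = IZR p / IZR q.

Definition is_H (alpha : R) (m : nat) (P : R * R) : Prop :=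
  in_Farey m (fst P) /\ in_Farey m (snd P) /\ fst P < alpha < snd P /\
  forall z, in_Farey m z -> ~ (fst P < z < snd P).

Definition H_pair (alpha : R) (m : nat) : R * R :=
  epsilon (inhabits (0, 0)) (fun P => is_H alpha m P).

(* Chains: the sequence of distinct values of f 1, f 2, f 3, ... in order of
   appearance.  [is_new f m]: f m differs from all earlier f j (1 <= j < m).
   [kth_new f k m]: m is the index where the k-th distinct value first
   appears, so the k-th chain element is f m. *)
Definition is_new {T : Type} (f : nat -> T) (m : nat) : Prop :=
  (1 <= m)%nat /\ forall j, (1 <= j < m)%nat -> f j <> f m.

Definition kth_new {T : Type} (f : nat -> T) (k m : nat) : Prop :=
  is_new f m /\
  exists l : list nat, NoDup l /\ length l = k /\
    (forall j, In j l <-> ((j <= m)%nat /\ is_new f j)).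

(* Main.v *)
Require Import Defs.
From Stdlib Require Import Reals ZArith List Lra Lia Psatz ClassicalEpsilon Classical Wf_nat Znumtheory.
Open Scope R_scope.

Definition comb (a b : Z) (e f : Z * Z) : Z * Z :=
  ((a * fst e + b * fst f)%Z, (a * snd e + b * snd f)%Z).

Lemma xi_comb alpha a b e f :
  xi alpha (comb a b e f) = IZR a * xi alpha e + IZR b * xi alpha f.
Proof. destruct e, f; unfold xi, comb; simpl; rewrite !plus_IZR, !mult_IZR; ring. Qed.

Lemma Rabs_add_same u v : 0 <= u * v -> Rabs (u + v) = Rabs u + Rabs v.
Proof. intros H; unfold Rabs; repeat destruct Rcase_abs; nra. Qed.

Lemma abs_decomp (a b : Z) X Y :
  ~ (0 < a /\ 0 < b)%Z -> ~ (a < 0 /\ b < 0)%Z -> X * Y < 0 ->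
  Rabs (IZR a * X + IZR b * Y) = Rabs (IZR a) * Rabs X + Rabs (IZR b) * Rabs Y.
Proof.
  intros H1 H2 H3.
  assert (Hab : (a * b <= 0)%Z) by (destruct (Z.lt_trichotomy a 0) as [?|[?|?]]; destruct (Z.lt_trichotomy b 0) as [?|[?|?]]; nia).
  apply IZR_le in Hab; rewrite mult_IZR in Hab.
  rewrite Rabs_add_same by nra.
  rewrite !Rabs_mult; ring.
Qed.

Lemma Rabs_IZR_ge1 a : a <> 0%Z -> 1 <= Rabs (IZR a).
Proof. intros; rewrite <- abs_IZR; apply IZR_le; lia. Qed.

Lemma Rabs_IZR_le1 a : Rabs (IZR a) <= 1 -> (a = -1 \/ a = 0 \/ a = 1)%Z.
Proof. intros H; rewrite <- abs_IZR in H; apply le_IZR in H; lia. Qed.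

Lemma indep_comb e f a b : lin_indep2 e f ->
  (lin_indep2 e (comb a b e f) <-> b <> 0%Z).
Proof.
  destruct e as [e1 e2], f as [f1 f2]; unfold lin_indep2, comb; cbn [fst snd]; intros H; split.
  - intros H' Hb; subst b.
    destruct (H' a (-1)%Z) as [_ Hc]; [cbn [fst snd]; ring | cbn [fst snd]; ring | lia].
  - intros Hb c d H1 H2.
    destruct (H (c + d * a)%Z (d * b)%Z) as [Ha Hd]; [lia | lia | ].
    apply Z.mul_eq_0 in Hd; destruct Hd as [Hd|Hd]; [|lia]. subst d; lia.
Qed.

Lemma comb10 e f : comb 1 0 e f = e.
Proof. destruct e, f; unfold comb; cbn [fst snd]; f_equal; ring. Qed.
Lemma comb01 e f : comb 0 1 e f = f.
Proof. destruct e, f; unfold comb; cbn [fst snd]; f_equal; ring. Qed.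

Lemma GenA alpha m e f :
  in_box m e -> in_box m f -> (0 < fst e)%Z -> (0 < fst f)%Z ->
  lin_indep2 e f ->
  (forall w, in_box m w -> exists a b, w = comb a b e f /\ ~(0<a/\0<b)%Z /\ ~(a<0/\b<0)%Z) ->
  xi alpha e * xi alpha f < 0 ->
  Rabs (xi alpha e) < Rabs (xi alpha f) ->
  is_A alpha m (e,f) /\ forall M, is_A alpha m M -> M = (e,f).
Proof.
  intros Be Bf Pe Pf Ief Dec Hs Hlt.
  set (X := xi alpha e) in *. set (Y := xi alpha f) in *.
  assert (HX : 0 < Rabs X).
  { apply Rabs_pos_lt. intro H0; rewrite H0 in Hs; lra. }
  assert (HY : 0 <= Rabs Y) by apply Rabs_pos.
  assert (Key : forall w, in_box m w -> exists a b, w = comb a b e f /\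
     ~(0<a/\0<b)%Z /\ ~(a<0/\b<0)%Z /\
     Rabs (xi alpha w) = Rabs (IZR a) * Rabs X + Rabs (IZR b) * Rabs Y).
  { intros w Bw; destruct (Dec w Bw) as (a & b & -> & H1 & H2).
    exists a, b; repeat split; auto. rewrite xi_comb; apply abs_decomp; auto. }
  assert (Hne : e <> (0%Z,0%Z)). { destruct e; simpl in *; intro Hq; inversion Hq; lia. }
  assert (Hnf : f <> (0%Z,0%Z)). { destruct f; simpl in *; intro Hq; inversion Hq; lia. }
  split.
  - split.
    + split; [exact Be|]; split; [exact Hne|]; split; [left; exact Pe|].
      intros v Bv Hv. cbn [fst snd]; fold X Y. destruct (Key v Bv) as (a & b & -> & _ & _ & ->).
      assert (0 <= Rabs (IZR a)) by apply Rabs_pos.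
      assert (0 <= Rabs (IZR b)) by apply Rabs_pos.
      destruct (Z.eq_dec b 0) as [Hb|Hb].
      * subst b. destruct (Z.eq_dec a 0) as [Ha|Ha].
        { subst a; exfalso; apply Hv; unfold comb; cbn [fst snd]; f_equal; ring. }
        pose proof (Rabs_IZR_ge1 a Ha). nra.
      * pose proof (Rabs_IZR_ge1 b Hb). nra.
    + simpl. split; [exact Bf|]; split; [exact Ief|]; split; [left; exact Pf|].
      intros v Bv Hv. cbn [fst snd]; fold X Y. destruct (Key v Bv) as (a & b & -> & _ & _ & ->).
      apply indep_comb in Hv; auto.
      assert (0 <= Rabs (IZR a)) by apply Rabs_pos.
      pose proof (Rabs_IZR_ge1 b Hv). nra.
  - intros [w1 w2] [[B1 [N1 [No1 M1]]] [B2 [I2 [No2 M2]]]]. simpl in *.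
    assert (Ee : w1 = e).
    { destruct (Key w1 B1) as (a & b & -> & _ & _ & Hr).
      specialize (M1 e Be Hne). rewrite Hr in M1.
      assert (0 <= Rabs (IZR a)) by apply Rabs_pos.
      assert (0 <= Rabs (IZR b)) by apply Rabs_pos.
      destruct (Z.eq_dec b 0) as [Hb|Hb].
      2:{ pose proof (Rabs_IZR_ge1 b Hb). exfalso. fold X in M1. nra. }
      subst b. fold X in M1.
      assert (Ha1 : Rabs (IZR a) <= 1) by nra.
      destruct (Rabs_IZR_le1 a Ha1) as [Ha|[Ha|Ha]]; subst a.
      - exfalso. destruct e as [e1 e2]; unfold normalized, comb in No1; cbn [fst snd] in *. lia.
      - exfalso. apply N1. unfold comb; cbn [fst snd]; f_equal; ring.
      - apply comb10. }
    subst w1.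
    assert (Ef : w2 = f).
    { destruct (Key w2 B2) as (a & b & -> & _ & _ & Hr).
      apply indep_comb in I2; auto.
      specialize (M2 f Bf Ief). rewrite Hr in M2. fold Y in M2.
      assert (0 <= Rabs (IZR a)) by apply Rabs_pos.
      pose proof (Rabs_IZR_ge1 b I2).
      assert (Ha0 : Rabs (IZR a) = 0) by nra.
      assert (Hb1 : Rabs (IZR b) <= 1) by nra.
      assert (a = 0%Z). { rewrite <- abs_IZR in Ha0. apply eq_IZR in Ha0. lia. }
      subst a.
      destruct (Rabs_IZR_le1 b Hb1) as [Hb|[Hb|Hb]]; subst b; try lia.
      - exfalso. destruct f as [f1 f2]; unfold normalized, comb in No2; cbn [fst snd] in *. lia.
      - apply comb01. }
    subst; reflexivity.
Qed.
Definition quad := (Z * Z * Z * Z)%type.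

Definition step (alpha : R) (m : nat) (P : quad) : quad :=
  let '(p1, q1, p2, q2) := P in
  if Z.eq_dec (q1 + q2) (Z.of_nat m) then
    if Rlt_dec alpha (IZR (p1 + p2) / IZR (q1 + q2)) then (p1, q1, p1 + p2, q1 + q2)%Z
    else (p1 + p2, q1 + q2, p2, q2)%Z
  else P.

Fixpoint Pq (alpha : R) (m : nat) : quad :=
  match m with O => (0, 1, 1, 1)%Z | S m' => step alpha m (Pq alpha m') end.

Definition Inv (alpha : R) (m : nat) (P : quad) : Prop :=
  let '(p1, q1, p2, q2) := P in
  (1 <= q1 <= Z.of_nat m)%Z /\ (1 <= q2 <= Z.of_nat m)%Z /\ (Z.of_nat m < q1 + q2)%Z /\
  (0 <= p1 <= q1)%Z /\ (0 <= p2 <= q2)%Z /\ (q1 * p2 - p1 * q2 = 1)%Z /\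
  0 < xi alpha (q1, (- p1)%Z) /\ xi alpha (q2, (- p2)%Z) < 0.

Lemma frac_lt alpha P Q : 0 < IZR Q ->
  (alpha < IZR P / IZR Q <-> xi alpha (Q, (- P)%Z) < 0).
Proof.
  intros HQ; unfold xi; cbn [fst snd]; rewrite opp_IZR; split; intro H.
  - apply (Rmult_lt_compat_r (IZR Q)) in H; auto.
    replace (IZR P / IZR Q * IZR Q) with (IZR P) in H by (field; lra). lra.
  - apply Rmult_lt_reg_r with (IZR Q); auto.
    replace (IZR P / IZR Q * IZR Q) with (IZR P) by (field; lra). lra.
Qed.

Lemma frac_gt alpha P Q : 0 < IZR Q ->
  (IZR P / IZR Q < alpha <-> 0 < xi alpha (Q, (- P)%Z)).
Proof.
  intros HQ; unfold xi; cbn [fst snd]; rewrite opp_IZR; split; intro H.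
  - apply (Rmult_lt_compat_r (IZR Q)) in H; auto.
    replace (IZR P / IZR Q * IZR Q) with (IZR P) in H by (field; lra). lra.
  - apply Rmult_lt_reg_r with (IZR Q); auto.
    replace (IZR P / IZR Q * IZR Q) with (IZR P) by (field; lra). lra.
Qed.

Section S.
Variable alpha : R.
Hypothesis Halpha : 0 < alpha < 1.
Hypothesis Hirr : forall p q : Z, q <> 0%Z -> alpha <> IZR p / IZR q.

Lemma Inv1 : Inv alpha 1 (Pq alpha 1).
Proof.
  simpl. unfold Inv, xi; cbn [fst snd]. repeat split; try lia; simpl; lra.
Qed.

Lemma Inv_step m P : (1 <= m)%nat -> Inv alpha m P -> Inv alpha (S m) (step alpha (S m) P).
Proof.
  intros Hm. destruct P as [[[p1 q1] p2] q2]. unfold step.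
  intros (Hq1 & Hq2 & Hs & Hp1 & Hp2 & Hd & Hx1 & Hx2).
  rewrite Nat2Z.inj_succ in *.
  assert (HQ : 0 < IZR (q1 + q2)) by (apply IZR_lt; lia).
  destruct Z.eq_dec as [E|E]; [destruct Rlt_dec as [L|L]|].
  - apply frac_lt in L; auto.
    unfold Inv; rewrite Nat2Z.inj_succ. repeat split; try lia; auto.
  - assert (L' : IZR (p1 + p2) / IZR (q1 + q2) < alpha).
    { destruct (Rtotal_order alpha (IZR (p1 + p2) / IZR (q1 + q2))) as [h|[h|h]]; auto.
      - contradiction.
      - exfalso; apply (Hirr (p1+p2) (q1+q2)); auto; lia. }
    apply frac_gt in L'; auto.
    unfold Inv; rewrite Nat2Z.inj_succ. repeat split; try lia; auto.
  - unfold Inv; rewrite Nat2Z.inj_succ. repeat split; try lia; auto.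
Qed.

Lemma Inv_all m : (1 <= m)%nat -> Inv alpha m (Pq alpha m).
Proof.
  induction m as [|m IH]; intros Hm; [lia|].
  destruct (Nat.eq_dec m 0) as [->|Hm0]; [apply Inv1|].
  simpl Pq. apply Inv_step; [lia|]. apply IH; lia.
Qed.

End S.
Lemma comb_swap a b e f : comb a b e f = comb b a f e.
Proof. unfold comb; f_equal; ring. Qed.

Lemma dec12 m p1 q1 p2 q2 :
  (1 <= q1)%Z -> (1 <= q2)%Z -> (Z.of_nat m < q1 + q2)%Z -> (q1 * p2 - p1 * q2 = 1)%Z ->
  forall w, in_box m w -> exists a b, w = comb a b (q1, (-p1)%Z) (q2, (-p2)%Z) /\
     ~(0<a/\0<b)%Z /\ ~(a<0/\b<0)%Z.
Proof.
  intros H1 H2 Hs Hd [r1 r2] [B1 B2]; cbn [fst snd] in *.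
  exists (r1 * p2 + r2 * q2)%Z, (- (q1 * r2 + p1 * r1))%Z.
  assert (E1 : ((r1 * p2 + r2 * q2) * q1 + (- (q1 * r2 + p1 * r1)) * q2 - r1
                = r1 * (q1 * p2 - p1 * q2 - 1))%Z) by ring.
  assert (E2 : ((r1 * p2 + r2 * q2) * (-p1) + (- (q1 * r2 + p1 * r1)) * (-p2) - r2
                = r2 * (q1 * p2 - p1 * q2 - 1))%Z) by ring.
  rewrite Hd, Z.sub_diag, Z.mul_0_r in E1, E2.
  split; [unfold comb; cbn [fst snd]; f_equal; lia|].
  set (a := (r1 * p2 + r2 * q2)%Z) in *. set (b := (- (q1 * r2 + p1 * r1))%Z) in *.
  assert (Er1 : r1 = (a * q1 + b * q2)%Z) by lia.
  split; intros [Ha Hb].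
  - assert (0 <= (a - 1) * q1)%Z by (apply Z.mul_nonneg_nonneg; lia).
    assert (0 <= (b - 1) * q2)%Z by (apply Z.mul_nonneg_nonneg; lia).
    assert (((a - 1) * q1 = a * q1 - q1)%Z) by ring.
    assert (((b - 1) * q2 = b * q2 - q2)%Z) by ring. lia.
  - assert (0 <= (- a - 1) * q1)%Z by (apply Z.mul_nonneg_nonneg; lia).
    assert (0 <= (- b - 1) * q2)%Z by (apply Z.mul_nonneg_nonneg; lia).
    assert (((- a - 1) * q1 = - (a * q1) - q1)%Z) by ring.
    assert (((- b - 1) * q2 = - (b * q2) - q2)%Z) by ring. lia.
Qed.

Lemma indep12 p1 q1 p2 q2 : (q1 * p2 - p1 * q2 = 1)%Z ->
  lin_indep2 (q1, (-p1)%Z) (q2, (-p2)%Z) /\ lin_indep2 (q2, (-p2)%Z) (q1, (-p1)%Z).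
Proof.
  intros Hd; split; intros a b E1 E2; cbn [fst snd] in *.
  - assert (F : (a * p1 + b * p2 = 0)%Z) by lia.
    assert (Ea : (a = p2*(a*q1+b*q2) - q2*(a*p1+b*p2))%Z)
      by (transitivity (a*(q1*p2-p1*q2))%Z; [rewrite Hd; ring | ring]).
    assert (Eb : (b = q1*(a*p1+b*p2) - p1*(a*q1+b*q2))%Z)
      by (transitivity (b*(q1*p2-p1*q2))%Z; [rewrite Hd; ring | ring]).
    rewrite E1, F in Ea, Eb. lia.
  - assert (F : (a * p2 + b * p1 = 0)%Z) by lia.
    assert (Ea : (a = q1*(a*p2+b*p1) - p1*(a*q2+b*q1))%Z)
      by (transitivity (a*(q1*p2-p1*q2))%Z; [rewrite Hd; ring | ring]).
    assert (Eb : (b = p2*(a*q2+b*q1) - q2*(a*p2+b*p1))%Z)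
      by (transitivity (b*(q1*p2-p1*q2))%Z; [rewrite Hd; ring | ring]).
    rewrite E1, F in Ea, Eb. lia.
Qed.

Definition sortA (alpha : R) (P : quad) : (Z * Z) * (Z * Z) :=
  let '(p1, q1, p2, q2) := P in
  if Rlt_dec (Rabs (xi alpha (q1, (-p1)%Z))) (Rabs (xi alpha (q2, (-p2)%Z)))
  then ((q1, (-p1)%Z), (q2, (-p2)%Z)) else ((q2, (-p2)%Z), (q1, (-p1)%Z)).

Definition fr (P : quad) : R * R :=
  let '(p1, q1, p2, q2) := P in (IZR p1 / IZR q1, IZR p2 / IZR q2).
Lemma frac_cmp a b c d : 0 < IZR b -> 0 < IZR d -> IZR a / IZR b < IZR c / IZR d -> (a * d < c * b)%Z.
Proof.
  intros Hb Hd H. apply lt_IZR; rewrite !mult_IZR.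
  apply (Rmult_lt_compat_r (IZR b * IZR d)) in H; [|nra].
  replace (IZR a / IZR b * (IZR b * IZR d)) with (IZR a * IZR d) in H by (field; lra).
  replace (IZR c / IZR d * (IZR b * IZR d)) with (IZR c * IZR b) in H by (field; lra).
  exact H.
Qed.

Lemma H_unique alpha m P0 P : is_H alpha m P0 -> is_H alpha m P -> P = P0.
Proof.
  intros (F1 & F2 & [L1 L2] & N0) (G1 & G2 & [K1 K2] & N).
  assert (fst P = fst P0).
  { destruct (Rtotal_order (fst P) (fst P0)) as [h|[h|h]]; auto; exfalso.
    - apply (N (fst P0) F1); lra.
    - apply (N0 (fst P) G1); lra. }
  assert (snd P = snd P0).
  { destruct (Rtotal_order (snd P) (snd P0)) as [h|[h|h]]; auto; exfalso.
    - apply (N0 (snd P) G2); lra.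
    - apply (N (snd P0) F2); lra. }
  destruct P, P0; simpl in *; subst; reflexivity.
Qed.

Section S2.
Variable alpha : R.
Hypothesis Halpha : 0 < alpha < 1.
Hypothesis Hirr : forall p q : Z, q <> 0%Z -> alpha <> IZR p / IZR q.

Lemma A_char m : (1 <= m)%nat -> A_mat alpha m = sortA alpha (Pq alpha m).
Proof.
  intros Hm. pose proof (Inv_all alpha Halpha Hirr m Hm) as HI.
  destruct (Pq alpha m) as [[[p1 q1] p2] q2].
  destruct HI as (Hq1 & Hq2 & Hs & Hp1 & Hp2 & Hd & Hx1 & Hx2).
  set (e1 := (q1, (-p1)%Z)) in *. set (e2 := (q2, (-p2)%Z)) in *.
  assert (B1 : in_box m e1) by (unfold in_box, e1; cbn [fst snd]; lia).
  assert (B2 : in_box m e2) by (unfold in_box, e2; cbn [fst snd]; lia).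
  destruct (indep12 p1 q1 p2 q2 Hd) as [I12 I21].
  pose proof (dec12 m p1 q1 p2 q2 ltac:(lia) ltac:(lia) Hs Hd) as D12.
  assert (D21 : forall w, in_box m w -> exists a b, w = comb a b e2 e1 /\
     ~(0<a/\0<b)%Z /\ ~(a<0/\b<0)%Z).
  { intros w Bw; destruct (D12 w Bw) as (a & b & -> & h1 & h2).
    exists b, a; rewrite comb_swap; repeat split; tauto. }
  assert (Hneq : Rabs (xi alpha e1) <> Rabs (xi alpha e2)).
  { rewrite (Rabs_right (xi alpha e1)) by lra. rewrite (Rabs_left (xi alpha e2)) by lra.
    intro E. apply (Hirr (p1 + p2) (q1 + q2)); [lia|].
    assert (E' : IZR (q1 + q2) * alpha = IZR (p1 + p2)).
    { unfold e1, e2, xi in E; cbn [fst snd] in E. rewrite !plus_IZR. rewrite !opp_IZR in E. lra. }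
    assert (HQ : 0 < IZR (q1 + q2)) by (apply IZR_lt; lia).
    rewrite <- E'. field. lra. }
  unfold sortA; fold e1 e2.
  destruct Rlt_dec as [L|L].
  - destruct (GenA alpha m e1 e2 B1 B2 ltac:(unfold e1; simpl; lia) ltac:(unfold e2; simpl; lia)
      I12 D12 ltac:(nra) L) as [HA U].
    apply U. unfold A_mat. apply epsilon_spec. exists (e1, e2); exact HA.
  - assert (L' : Rabs (xi alpha e2) < Rabs (xi alpha e1)).
    { destruct (Rtotal_order (Rabs (xi alpha e2)) (Rabs (xi alpha e1))) as [h|[h|h]]; auto.
      - exfalso; apply Hneq; auto.
      - contradiction. }
    destruct (GenA alpha m e2 e1 B2 B1 ltac:(unfold e2; simpl; lia) ltac:(unfold e1; simpl; lia)
      I21 D21 ltac:(nra) L') as [HA U].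
    apply U. unfold A_mat. apply epsilon_spec. exists (e2, e1); exact HA.
Qed.

Lemma H_char m : (1 <= m)%nat -> H_pair alpha m = fr (Pq alpha m).
Proof.
  intros Hm. pose proof (Inv_all alpha Halpha Hirr m Hm) as HI.
  destruct (Pq alpha m) as [[[p1 q1] p2] q2].
  destruct HI as (Hq1 & Hq2 & Hs & Hp1 & Hp2 & Hd & Hx1 & Hx2).
  assert (HQ1 : 0 < IZR q1) by (apply IZR_lt; lia).
  assert (HQ2 : 0 < IZR q2) by (apply IZR_lt; lia).
  assert (HH : is_H alpha m (fr (p1, q1, p2, q2))).
  { unfold fr, is_H; cbn [fst snd]. split; [|split; [|split; [split|]]].
    - exists p1, q1; repeat split; try lia.
      apply Z.bezout_1_gcd. exists (-q2)%Z, p2. lia.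
    - exists p2, q2; repeat split; try lia.
      apply Z.bezout_1_gcd. exists q1, (-p1)%Z. lia.
    - apply frac_gt; auto.
    - apply frac_lt; auto.
    - intros z (p & q & h1 & h2 & h3 & h4 & h5 & ->) [Z1 Z2].
      assert (HQ : 0 < IZR q) by (apply IZR_lt; lia).
      apply frac_cmp in Z1; auto. apply frac_cmp in Z2; auto.
      assert (Eq : (q = q1 * (p2 * q - p * q2) + q2 * (p * q1 - p1 * q))%Z)
        by (transitivity (q * (q1 * p2 - p1 * q2))%Z; [rewrite Hd; ring | ring]).
      assert (q1 * (p2 * q - p * q2) >= q1)%Z by nia.
      assert (q2 * (p * q1 - p1 * q) >= q2)%Z by nia.
      lia. }
  apply (H_unique alpha m); auto.
  unfold H_pair. apply epsilon_spec. exists (fr (p1, q1, p2, q2)); exact HH.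
Qed.

End S2.
Lemma frac_inj p q p' q' : (0 < q)%Z -> (0 < q')%Z -> Z.gcd p q = 1%Z -> Z.gcd p' q' = 1%Z ->
  IZR p / IZR q = IZR p' / IZR q' -> p = p' /\ q = q'.
Proof.
  intros Hq Hq' G G' E.
  assert (HQ : 0 < IZR q) by (apply IZR_lt; lia).
  assert (HQ' : 0 < IZR q') by (apply IZR_lt; lia).
  assert (E2 : (p * q' = p' * q)%Z).
  { apply eq_IZR; rewrite !mult_IZR.
    assert (IZR p = IZR p / IZR q * IZR q) as -> by (field; lra).
    rewrite E. field; lra. }
  assert (D1 : (q | q')%Z).
  { apply (Z.gauss q p q'). exists p'. lia. rewrite Z.gcd_comm; auto. }
  assert (D2 : (q' | q)%Z).
  { apply (Z.gauss q' p' q). exists p. lia. rewrite Z.gcd_comm; auto. }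
  assert (q = q') by (apply Z.divide_antisym_nonneg; auto; lia).
  subst q'. split; [|reflexivity]. nia.
Qed.

Definition sumq (P : quad) : Z := let '(_, q1, _, q2) := P in (q1 + q2)%Z.

Lemma is_new_transfer {T U} (f : nat -> T) (g : nat -> U) :
  (forall j m, (1 <= j)%nat -> (1 <= m)%nat -> (f j = f m <-> g j = g m)) ->
  forall m, is_new f m <-> is_new g m.
Proof.
  intros H m; unfold is_new; split; intros [Hm Hj]; split; auto;
    intros j Hjm E; apply (Hj j Hjm); apply H; auto; lia.
Qed.

Lemma kth_transfer {T U} (f : nat -> T) (g : nat -> U) :
  (forall j m, (1 <= j)%nat -> (1 <= m)%nat -> (f j = f m <-> g j = g m)) ->
  forall k m, kth_new f k m <-> kth_new g k m.
Proof.
  intros H k m. pose proof (is_new_transfer f g H) as HT.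
  unfold kth_new. rewrite HT. setoid_rewrite HT. tauto.
Qed.

Lemma chain_exists {T} (f : nat -> T) :
  (forall m, exists m', (m < m')%nat /\ is_new f m') ->
  forall k, (1 <= k)%nat -> exists m, kth_new f k m.
Proof.
  intros Hinf k Hk. induction k as [|k IH]; [lia|].
  destruct (Nat.eq_dec k 0) as [->|Hk0].
  - exists 1%nat. split; [split; [lia | intros; lia]|].
    exists (1%nat :: nil). split; [constructor; [simpl; tauto | constructor]|].
    split; [reflexivity|]. intros j; simpl; split.
    + intros [<-|[]]. split; [lia|]. split; [lia| intros; lia].
    + intros [h1 [h2 _]]. left; lia.
  - destruct IH as [m [Hn [l [Hnd [Hl Hin]]]]]; [lia|].
    destruct (dec_inh_nat_subset_has_unique_least_element
                (fun n => (m < n)%nat /\ is_new f n) (fun n => classic _) (Hinf m))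
      as [m' [[[Hmm' Hn'] Hleast] _]].
    exists m'. split; auto. exists (m' :: l). split; [|split].
    + constructor; auto. intro Hi. apply Hin in Hi. lia.
    + simpl; lia.
    + intros j; simpl; split.
      * intros [<-|Hi]; [split; auto|]. apply Hin in Hi. destruct Hi; split; auto; lia.
      * intros [Hj Hnj]. destruct (le_lt_dec j m) as [h|h].
        { right; apply Hin; auto. }
        destruct (Nat.eq_dec j m') as [->|h']; [left; auto|].
        exfalso. assert (m' <= j)%nat by (apply Hleast; auto). lia.
Qed.

Section S3.
Variable alpha : R.
Hypothesis Halpha : 0 < alpha < 1.
Hypothesis Hirr : forall p q : Z, q <> 0%Z -> alpha <> IZR p / IZR q.

Lemma A_iff j m : (1 <= j)%nat -> (1 <= m)%nat ->
  (A_mat alpha j = A_mat alpha m <-> Pq alpha j = Pq alpha m).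
Proof.
  intros Hj Hm. rewrite (A_char alpha Halpha Hirr j Hj), (A_char alpha Halpha Hirr m Hm).
  split; [|intros ->; reflexivity].
  pose proof (Inv_all alpha Halpha Hirr j Hj) as HI.
  pose proof (Inv_all alpha Halpha Hirr m Hm) as HJ.
  destruct (Pq alpha j) as [[[p1 q1] p2] q2].
  destruct (Pq alpha m) as [[[p1' q1'] p2'] q2'].
  destruct HI as (_ & _ & _ & _ & _ & _ & Hx1 & Hx2).
  destruct HJ as (_ & _ & _ & _ & _ & _ & Hy1 & Hy2).
  unfold sortA. destruct Rlt_dec; destruct Rlt_dec; intro E;
    injection E as E1 E2 E3 E4;
    first [ repeat f_equal; lia | rewrite E1, E2 in Hx1; lra | rewrite E1, E2 in Hx2; lra ].
Qed.

Lemma H_iff j m : (1 <= j)%nat -> (1 <= m)%nat ->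
  (H_pair alpha j = H_pair alpha m <-> Pq alpha j = Pq alpha m).
Proof.
  intros Hj Hm. rewrite (H_char alpha Halpha Hirr j Hj), (H_char alpha Halpha Hirr m Hm).
  split; [|intros ->; reflexivity].
  pose proof (Inv_all alpha Halpha Hirr j Hj) as HI.
  pose proof (Inv_all alpha Halpha Hirr m Hm) as HJ.
  destruct (Pq alpha j) as [[[p1 q1] p2] q2].
  destruct (Pq alpha m) as [[[p1' q1'] p2'] q2'].
  destruct HI as (? & ? & _ & ? & ? & Hd & _ & _).
  destruct HJ as (? & ? & _ & ? & ? & Hd' & _ & _).
  unfold fr; intro E; injection E as E1 E2.
  assert (g1 : Z.gcd p1 q1 = 1%Z) by (apply Z.bezout_1_gcd; exists (-q2)%Z, p2; lia).
  assert (g2 : Z.gcd p2 q2 = 1%Z) by (apply Z.bezout_1_gcd; exists q1, (-p1)%Z; lia).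
  assert (g1' : Z.gcd p1' q1' = 1%Z) by (apply Z.bezout_1_gcd; exists (-q2')%Z, p2'; lia).
  assert (g2' : Z.gcd p2' q2' = 1%Z) by (apply Z.bezout_1_gcd; exists q1', (-p1')%Z; lia).
  destruct (frac_inj p1 q1 p1' q1') as [-> ->]; try lia; auto.
  destruct (frac_inj p2 q2 p2' q2') as [-> ->]; try lia; auto.
Qed.

Lemma sum_mono j i : (1 <= j)%nat -> (j <= i)%nat -> (sumq (Pq alpha j) <= sumq (Pq alpha i))%Z.
Proof.
  intros Hj Hji. induction Hji as [|i Hji IH]; [lia|].
  assert (HI := Inv_all alpha Halpha Hirr i ltac:(lia)).
  simpl Pq. destruct (Pq alpha i) as [[[p1 q1] p2] q2].
  destruct HI as (? & ? & _).
  unfold step. destruct Z.eq_dec; [destruct Rlt_dec|]; simpl in *; lia.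
Qed.

Lemma infinite m : (1 <= m)%nat -> exists N, (m < N)%nat /\ is_new (Pq alpha) N.
Proof.
  intros Hm. assert (HI := Inv_all alpha Halpha Hirr m Hm).
  assert (Hs : (Z.of_nat m < sumq (Pq alpha m))%Z).
  { destruct (Pq alpha m) as [[[p1 q1] p2] q2]; simpl; destruct HI as (_ & _ & h & _); lia. }
  set (N := Z.to_nat (sumq (Pq alpha m))).
  assert (HN : Z.of_nat N = sumq (Pq alpha m)) by (unfold N; rewrite Z2Nat.id; lia).
  assert (Const : forall d, (m + d < N)%nat -> Pq alpha (m + d) = Pq alpha m).
  { induction d as [|d IHd]; intros Hd; [rewrite Nat.add_0_r; reflexivity|].
    rewrite Nat.add_succ_r. simpl Pq. rewrite IHd by lia.
    destruct (Pq alpha m) as [[[p1 q1] p2] q2]. unfold step. simpl in HN.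
    destruct Z.eq_dec; [lia|reflexivity]. }
  assert (HmN : (m < N)%nat) by lia.
  destruct N as [|N'] eqn:EN; [lia|].
  assert (C' : Pq alpha N' = Pq alpha m).
  { replace N' with (m + (N' - m))%nat by lia. apply Const. lia. }
  assert (Inc : (sumq (Pq alpha m) < sumq (Pq alpha (S N')))%Z).
  { simpl Pq. rewrite C'. destruct (Pq alpha m) as [[[p1 q1] p2] q2].
    destruct HI as (? & ? & _). unfold step. simpl in HN.
    destruct Z.eq_dec; [destruct Rlt_dec|]; simpl; lia. }
  exists (S N'). split; auto. split; [lia|].
  intros j Hj E. assert (Hle := sum_mono j N' ltac:(lia) ltac:(lia)).
  rewrite C', E in Hle. lia.
Qed.

End S3.

Theorem theorem1 (alpha : R) (Halpha : 0 < alpha < 1)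
  (Hirr : forall p q : Z, q <> 0%Z -> alpha <> IZR p / IZR q)
  (k : nat) (Hk : (1 <= k)%nat) :
  exists m m' : nat,
    kth_new (A_mat alpha) k m /\ kth_new (H_pair alpha) k m' /\
    exists p q p' q' : Z,
      A_mat alpha m = ((q, (- p)%Z), (q', (- p')%Z)) /\
      (H_pair alpha m' = (IZR p / IZR q, IZR p' / IZR q') \/
       H_pair alpha m' = (IZR p' / IZR q', IZR p / IZR q)).
Proof.
  assert (HAH : forall j m, (1 <= j)%nat -> (1 <= m)%nat ->
     (A_mat alpha j = A_mat alpha m <-> H_pair alpha j = H_pair alpha m)).
  { intros j m Hj Hm. rewrite A_iff, H_iff by auto. tauto. }
  assert (HAP : forall j m, (1 <= j)%nat -> (1 <= m)%nat ->
     (Pq alpha j = Pq alpha m <-> A_mat alpha j = A_mat alpha m)).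
  { intros j m Hj Hm. rewrite A_iff by auto. tauto. }
  assert (Hinf : forall m, exists m', (m < m')%nat /\ is_new (A_mat alpha) m').
  { intros m. destruct (infinite alpha Halpha Hirr (Nat.max m 1) ltac:(lia)) as [N [HN Hn]].
    exists N; split; [lia|]. apply (is_new_transfer _ _ HAP); auto. }
  destruct (chain_exists _ Hinf k Hk) as [m Hm].
  exists m, m. split; auto. split; [apply (kth_transfer _ _ HAH); auto|].
  assert (H1 : (1 <= m)%nat) by (destruct Hm as [[h _] _]; auto).
  rewrite (A_char alpha Halpha Hirr m H1), (H_char alpha Halpha Hirr m H1).
  destruct (Pq alpha m) as [[[p1 q1] p2] q2]. unfold sortA, fr.
  destruct Rlt_dec.
  - exists p1, q1, p2, q2. split; auto.
  - exists p2, q2, p1, q1. split; auto.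
Qed.
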